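(* Let $p$ be an odd prime and $b,c\in\mathbb Z$. Then, for every integer $x$, $$(x^2+bx+c)^{p-2}-c^{p-2}\equiv \binom{p-2}{1}_{b,c}x^{p-1}+\binom{p-2}{0}_{b,c}x^{p-2}+\sum_{1<k<p-1}\left(\binom{p-2}{k}_{b,c}+c^{p-1-k}\binom{p-2}{p-1-k}_{b,c}\right)x^{k-1}\pmod p.$$ Equivalently, the two sides are congruent as polynomials in $\mathbb F_p[x]$ modulo $x^p-x$.
   Context: For $n\in\mathbb N$ and $b,c\in\mathbb Z$, the generalized trinomial coefficients $\binom{n}{k}_{b,c}$ ($k\in\mathbb Z$) are the integers defined by the Laurent polynomial identity $\left(x+b+\frac{c}{x}\right)^n=\sum_{k\in\mathbb Z}\binom{n}{k}_{b,c}x^k$; in particular $\binom nk_{b,c}=0$ when $|k|>n$. *)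

(* Defs.v *)
From HB Require Import structures.
From mathcomp Require Import all_boot all_order all_algebra.
Set Implicit Arguments. Unset Strict Implicit. Unset Printing Implicit Defensive.
Import Order.TTheory GRing.Theory Num.Theory.
Local Open Scope ring_scope.

(* Generalized trinomial coefficient  binom(n,k)_{b,c}  : the coefficient of
   x^k in the Laurent polynomial (x + b + c/x)^n.  Since
   (x + b + c/x)^n = x^(-n) * (x^2 + b x + c)^n, this is the coefficient of
   x^(n+k) in the ordinary polynomial (x^2 + b x + c)^n when n + k >= 0,
   and 0 when n + k < 0 (also automatically 0 when k > n). *)
Definition trinom (b c : int) (n : nat) (k : int) : int :=
  match (n%:Z + k)%R with
  | Posz m => (('X^2 + b%:P * 'X + c%:P) ^+ n : {poly int})`_m
  | Negz _ => 0
  end.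

(* Main.v *)
Require Import Defs.
From HB Require Import structures.
From mathcomp Require Import all_boot all_order all_algebra all_field.
From mathcomp Require Import zify ring.
Import Order.TTheory GRing.Theory Num.Theory.
Local Open Scope ring_scope.

Section S.
Variables b c : int.
Definition A n j := (('X^2 + b%:P * 'X + c%:P) ^+ n : {poly int})`_j.

Lemma A_rec n j : A n.+1 j = (if (j < 2)%N then 0 else A n (j-2)) +
   (if j == 0%N then 0 else A n j.-1 * b) + A n j * c.
Proof.
rewrite /A exprSr !mulrDr !coefD coefMXn mulrA coefMX coefMC coefMC.
by case: (j == 0%N).
Qed.

Lemma A0 j : A 0 j = (j == 0%N)%:R.
Proof. by rewrite /A expr0 coef1. Qed.

Lemma A_van n j : (2 * n < j)%N -> A n j = 0.
Proof.
elim: n j => [|n IH] j hj; first by rewrite A0; case: j hj.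
rewrite A_rec IH; last lia.
rewrite ?mul0r ?addr0.
case: ifP => h1; case: ifP => h2 //; rewrite ?add0r ?addr0 ?IH ?mul0r //; lia.
Qed.

Lemma A_0 n : A n 0 = c ^+ n.
Proof. elim: n => [|n IH]; first by rewrite A0. by rewrite A_rec /= IH add0r exprSr. Qed.

Lemma A_dvd n m : (m < n)%N -> (c %| A n m)%Z.
Proof.
elim: n m => [//|n IH] m hm.
rewrite A_rec; apply: rpredD; [apply: rpredD|]; last by apply: dvdz_mull; rewrite dvdzz.
  by case: ifP => h; [rewrite dvdz0| apply: IH; lia].
by case: ifP => h; [rewrite dvdz0| apply: dvdz_mulr; apply: IH; lia].
Qed.

Lemma A_sym n j : (j <= 2 * n)%N -> c ^+ j * A n j = c ^+ n * A n (2 * n - j).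
Proof.
elim: n j => [|n IH] j hj.
  by have -> : j = 0%N by lia.
rewrite !A_rec !mulrDr.
set m := (2 * n.+1 - j)%N.
have e1 : c ^+ j * (if (j < 2)%N then 0 else A n (j - 2)) = c ^+ n.+1 * (A n m * c).
  case: ifP => h1.
    by rewrite A_van ?mulr0 ?mul0r //; lia.
  have -> : m = (2 * n - (j - 2))%N by lia.
  rewrite (_ : c ^+ n.+1 * (A n (2 * n - (j - 2)) * c) = c ^+ 2 * (c ^+ n * A n (2 * n - (j - 2)))); last by rewrite exprS; ring.
  rewrite -IH; last lia.
  have {1}-> : j = ((j - 2) + 2)%N by lia.
  rewrite exprD; ring.
have e2 : c ^+ j * (if j == 0%N then 0 else A n j.-1 * b) =
          c ^+ n.+1 * (if m == 0%N then 0 else A n m.-1 * b).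
  case: ifP => h1; case: ifP => h2.
  - by rewrite !mulr0.
  - by rewrite mulr0 A_van ?mul0r ?mulr0 //; lia.
  - by rewrite mulr0 A_van ?mul0r ?mulr0 //; lia.
  - have -> : m.-1 = (2 * n - j.-1)%N by lia.
    rewrite (_ : c ^+ n.+1 * (A n (2 * n - j.-1) * b) = c * b * (c ^+ n * A n (2 * n - j.-1))); last by rewrite exprS; ring.
    rewrite -IH; last lia.
    have {1}-> : j = (j.-1 + 1)%N by lia.
    rewrite exprD expr1; ring.
have e3 : c ^+ j * (A n j * c) = c ^+ n.+1 * (if (m < 2)%N then 0 else A n (m - 2)).
  case: ifP => h1.
    by rewrite A_van ?mulr0 ?mul0r //; lia.
  have -> : (m - 2 = 2 * n - j)%N by lia.
  rewrite (_ : c ^+ n.+1 * A n (2 * n - j) = c * (c ^+ n * A n (2 * n - j))); last by rewrite exprS mulrA.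
  rewrite -IH; last lia.
  ring.
rewrite e1 e2 e3; ring.
Qed.
Lemma A_horner n x : (x ^+ 2 + b * x + c) ^+ n = \sum_(j < (2 * n).+1) A n j * x ^+ j.
Proof.
transitivity ((('X^2 + b%:P * 'X + c%:P) ^+ n : {poly int}).[x]).
  by rewrite horner_exp !hornerE.
apply: horner_coef_wide; apply/leq_sizeP => j hj; apply: A_van; lia.
Qed.

Lemma trinomE n k : trinom b c n k%:Z = A n (n + k).
Proof. by rewrite /trinom -PoszD. Qed.

Lemma A_Fp (p : nat) n m : prime p -> (0 < m < n)%N ->
  (A n m)%:~R = (c%:~R : 'F_p) ^+ (n - m) * (A n (2 * n - m))%:~R.
Proof.
move=> hp hm.
have [c0|c0] := eqVneq (c%:~R : 'F_p) 0.
  rewrite c0 expr0n (_ : (n - m == 0)%N = false) ?mul0r; last lia.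
  have /dvdzP [k ->] := @A_dvd n m ltac:(lia).
  by rewrite rmorphM /= c0 mulr0.
apply: (mulfI (expf_neq0 m c0)).
rewrite -rmorphXn -rmorphM /= A_sym; last lia.
rewrite rmorphM !rmorphXn /= mulrA -exprD; congr (_ ^+ _ * _); lia.
Qed.
End S.
Theorem lemma2p2 (p : nat) (b c : int) :
  prime p -> odd p ->
  forall x : int,
    ((x ^+ 2 + b * x + c) ^+ (p - 2) - c ^+ (p - 2)
     == trinom b c (p - 2) 1 * x ^+ (p - 1)
        + trinom b c (p - 2) 0 * x ^+ (p - 2)
        + \sum_(2 <= k < p - 1)
            (trinom b c (p - 2) k%:Z
             + c ^+ (p - 1 - k) * trinom b c (p - 2) (p - 1 - k)%:Z)
            * x ^+ (k - 1)
     %[mod p%:Z])%Z.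
Proof.
move=> hp hodd x.
have p3 : (3 <= p)%N.
  have := prime_gt1 hp; case: (p) hodd => [|[|[|]]] //.
have [n pn] : exists n, p = n.+2 by exists (p - 2)%N; lia.
have n1 : (1 <= n)%N by lia.
have -> : (p - 2 = n)%N by lia.
have -> : (p - 1 = n.+1)%N by lia.
rewrite (_ : trinom b c n 1 = trinom b c n (1%N)%:Z) // (_ : trinom b c n 0 = trinom b c n (0%N)%:Z) //.
rewrite !trinomE addn0 A_horner.
rewrite eqz_mod_dvd (dvdz_pcharf (pchar_Fp hp)).
rewrite !(rmorphB, rmorphD, rmorphM, rmorphXn, rmorph_sum) /=.
rewrite subr_eq0; apply/eqP.
rewrite -(big_mkord xpredT (fun i => (A b c n i * x ^+ i)%:~R)).
rewrite big_ltn // (big_cat_nat _ (n := n)) //; last lia.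
rewrite (@big_ltn _ _ _ n); last lia.
rewrite (@big_ltn _ _ _ n.+1); last lia.
have Xp : forall i, (x%:~R : 'F_p) ^+ (i + n.+2) = x%:~R ^+ i.+1.
  move=> i; have e : n.+2 = #|'F_p| by rewrite card_Fp.
  by rewrite exprD e expf_card exprS mulrC.
rewrite big_add1 /= (big_addn 0 _ n.+2) (big_addn 0 _ 2).
rewrite addn1.
have -> : ((2 * n).+1 - n.+2 = n.-1)%N by lia.
have -> : (n.+1 - 2 = n.-1)%N by lia.
set T := (X in _ = _ + _ + X).
have key : \sum_(0 <= i < n.-1) ((A b c n i.+1 * x ^+ i.+1)%:~R : 'F_p) +
   \sum_(0 <= i < n.-1) (A b c n (i + n.+2) * x ^+ (i + n.+2))%:~R = T.
  rewrite /T -big_split; apply: eq_big_nat => i hi /=.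
  rewrite !trinomE !(rmorphD, rmorphM, rmorphXn) /= Xp.
  have -> : (i + 2 - 1 = i.+1)%N by lia.
  have -> : (n + (i + 2) = i + n.+2)%N by lia.
  have -> : (n + (n.+1 - (i + 2)) = 2 * n - i.+1)%N by lia.
  have -> : (n.+1 - (i + 2) = n - i.+1)%N by lia.
  rewrite (@A_Fp b c p n i.+1 hp); last lia.
  ring.
rewrite -key A_0 expr0 mulr1 !rmorphM !rmorphXn /=.
ring.
Qed.
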